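(* Let $\lambda=\sum_{i=1}^r m_i\omega_i\in P^+$. Then $V(\lambda)=\sum_{k_1,\dots,k_r\in\mathbb N,\ k_1\le m_1}\mathbf U(\mathfrak n^-_{r-1/2})(x^-_{1,r})^{k_1}\cdots(x^-_{r,r})^{k_r}v_\lambda$.
   Context: $\mathfrak g=\mathfrak{sp}_{2r}$: complex matrices $(a_{i,j})$, indices $1,\dots,r,-r,\dots,-1$, $a_{i,j}=-\mathrm{sgn}(i)\mathrm{sgn}(j)a_{-j,-i}$; $\mathfrak h$ spanned by $E_{i,i}-E_{-i,-i}$, dual basis $\varepsilon_i$; $\omega_i=\varepsilon_1+\dots+\varepsilon_i$, $P^+=\sum\mathbb N\omega_i$. Root vectors: $x^-_{i,j-1}=E_{j,i}-E_{-i,-j}$, $x^-_{i,\overline j}=E_{-j,i}+E_{-i,j}$ ($1\le i<j\le r$), $x^-_{i,\overline i}=E_{-i,i}$, and $x^-_{i,r}:=x^-_{i,\overline r}=E_{-r,i}+E_{-i,r}$ ($i<r$), $x^-_{r,r}=E_{-r,r}$. $\mathfrak n^-_{r-1/2}$ is the span of $x^-_{i,j}$ and $x^-_{i,\overline j}$ for $1\le i\le j<r$. $V(\lambda)$ is the irreducible finite-dimensional $\mathfrak g$-module of highest weight $\lambda$ (with respect to the Borel subalgebra spanned by $\mathfrak h$ and the matrices $x^+_{i,j-1}=E_{i,j}-E_{-j,-i}$, $x^+_{i,\overline j}=E_{i,-j}+E_{j,-i}$, $x^+_{i,\overline i}=E_{i,-i}$), with highest weight vector $v_\lambda$. *)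

(* Defs.v *)
From HB Require Import structures.
From mathcomp Require Import all_boot all_order all_algebra.
From mathcomp Require Import complex.
From mathcomp Require Import reals Rstruct.
Set Implicit Arguments. Unset Strict Implicit. Unset Printing Implicit Defensive.
Import Order.TTheory GRing.Theory Num.Theory.
Local Open Scope ring_scope.

Definition CC : Type := complex Rdefinitions.R.
Check (CC : fieldType).

(* Indices 1,...,r,-r,...,-1 of sp_{2r} are encoded (as integers k) in the
   positions 0,...,2r-1 of a 2r x 2r matrix: k>0 |-> k-1, k<0 |-> 2r+k. *)
Definition ix (r : nat) (k : int) : nat :=
  if (0 < k)%R then (`|k|%N).-1 else (r.*2 - `|k|%N)%N.

Definition E (r : nat) (k l : int) : 'M[CC]_(r.*2) :=
  \matrix_(a < r.*2, b < r.*2) ((nat_of_ord a == ix r k) && (nat_of_ord b == ix r l))%:R.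

Definition sgnp (r : nat) (p : 'I_(r.*2)) : CC := if (p < r)%N then 1 else -1.

(* sp_{2r}: a_{i,j} = - sgn(i) sgn(j) a_{-j,-i}; position of -i is rev_ord. *)
Definition is_sp (r : nat) (A : 'M[CC]_(r.*2)) : Prop :=
  forall p q : 'I_(r.*2), A p q = - (sgnp p * sgnp q) * A (rev_ord q) (rev_ord p).

Definition hcar (r i : nat) : 'M[CC]_(r.*2) := E r i i - E r (- i%:Z) (- i%:Z).

(* x^+_{i,j-1} = E_{i,j} - E_{-j,-i}  (1 <= i < j <= r) *)
Definition xp (r i j : nat) : 'M[CC]_(r.*2) := E r i j - E r (- j%:Z) (- i%:Z).
Definition xpbar (r i j : nat) : 'M[CC]_(r.*2) :=
  if i == j then E r i (- i%:Z) else E r i (- j%:Z) + E r j (- i%:Z).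

(* x^-_{i,j-1} = E_{j,i} - E_{-i,-j}  (1 <= i < j <= r);  xm r i j = x^-_{i,j-1} *)
Definition xm (r i j : nat) : 'M[CC]_(r.*2) := E r j i - E r (- i%:Z) (- j%:Z).
Definition xmbar (r i j : nat) : 'M[CC]_(r.*2) :=
  if i == j then E r (- i%:Z) i else E r (- j%:Z) i + E r (- i%:Z) j.
(* x^-_{i,r} := x^-_{i,\bar r} *)
Definition xmr (r i : nat) : 'M[CC]_(r.*2) := xmbar r i r.

(* n^-_{r-1/2}: span of x^-_{i,j} and x^-_{i,\bar j}, 1 <= i <= j < r.
   x^-_{i,j} = xm r i j.+1. *)
Definition nminus_gen (r : nat) (Y : 'M[CC]_(r.*2)) : Prop :=
  exists i j : nat, [/\ (1 <= i)%N, (i <= j)%N, (j < r)%N &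
                       (Y = xm r i j.+1 \/ Y = xmbar r i j)].

Definition in_span (T : lmodType CC) (S : T -> Prop) (x : T) : Prop :=
  exists (s : seq T) (c : seq CC),
    (forall y, y \in s -> S y) /\ x = \sum_(i < size s) c`_i *: s`_i.

Definition nminus (r : nat) (Y : 'M[CC]_(r.*2)) : Prop := in_span (@nminus_gen r) Y.

Definition is_rep (r n : nat) (rho : 'M[CC]_(r.*2) -> 'M[CC]_n) : Prop :=
  (forall (a : CC) X Y, is_sp X -> is_sp Y -> rho (a *: X + Y) = a *: rho X + rho Y) /\
  (forall X Y, is_sp X -> is_sp Y ->
     rho (X *m Y - Y *m X) = rho X *m rho Y - rho Y *m rho X).

Definition is_subspace (n : nat) (P : 'cV[CC]_n -> Prop) : Prop :=
  [/\ P 0, (forall u w, P u -> P w -> P (u + w)) & (forall (a : CC) u, P u -> P (a *: u))].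

Definition irreducible_rep (r n : nat) (rho : 'M[CC]_(r.*2) -> 'M[CC]_n) : Prop :=
  (0 < n)%N /\
  forall P : 'cV[CC]_n -> Prop, is_subspace P ->
    (forall X w, is_sp X -> P w -> P (rho X *m w)) ->
    (exists w, P w /\ w <> 0) -> forall w, P w.

(* v is a highest weight vector of weight lambda = sum_{i=1}^r m_i omega_i;
   lambda(h_i) = m_i + ... + m_r. *)
Definition highest_weight_vector (r n : nat) (rho : 'M[CC]_(r.*2) -> 'M[CC]_n)
    (m : nat -> nat) (v : 'cV[CC]_n) : Prop :=
  [/\ v <> 0,
      (forall i, (1 <= i <= r)%N ->
         rho (hcar r i) *m v = (\sum_(i <= j < r.+1) m j)%:R *: v),
      (forall i j, (1 <= i)%N -> (i < j <= r)%N -> rho (xp r i j) *m v = 0) &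
      (forall i j, (1 <= i)%N -> (i <= j <= r)%N -> rho (xpbar r i j) *m v = 0)].

Definition mpow (n : nat) (A : 'M[CC]_n) (k : nat) : 'M[CC]_n := iter k (mulmx A) 1%:M.

(* image in End(V) of a monomial y_1 ... y_l of U(n^-_{r-1/2}) *)
Definition Un_monomial (r n : nat) (rho : 'M[CC]_(r.*2) -> 'M[CC]_n) (M : 'M[CC]_n) : Prop :=
  exists ys : seq 'M[CC]_(r.*2),
    (forall y, y \in ys -> nminus y) /\ M = foldr (fun y acc => rho y *m acc) 1%:M ys.

Definition xr_prod (r n : nat) (rho : 'M[CC]_(r.*2) -> 'M[CC]_n) (k : nat -> nat) : 'M[CC]_n :=
  foldr (fun i acc => mpow (rho (xmr r i)) (k i) *m acc) 1%:M (iota 1 r).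

Definition gen_family (r n : nat) (rho : 'M[CC]_(r.*2) -> 'M[CC]_n)
    (m : nat -> nat) (v : 'cV[CC]_n) (w : 'cV[CC]_n) : Prop :=
  exists (M : 'M[CC]_n) (k : nat -> nat),
    [/\ Un_monomial rho M, (k 1%N <= m 1%N)%N & w = M *m (xr_prod rho k *m v)].

(* Main.v *)
Require Import Defs.
From HB Require Import structures.
From mathcomp Require Import all_boot all_order all_algebra.
From mathcomp Require Import complex.
From mathcomp Require Import reals Rstruct.
From mathcomp Require Import zify ring lra.
Set Implicit Arguments. Unset Strict Implicit. Unset Printing Implicit Defensive.
Import Order.TTheory GRing.Theory Num.Theory.
Local Open Scope ring_scope.

Section Span.
Variable T : lmodType CC.
Variable S : T -> Prop.

Inductive spanI : T -> Prop :=
| spanI0 : spanI 0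
| spanIc (y : T) (a : CC) (w : T) : S y -> spanI w -> spanI (a *: y + w).

Lemma in_spanI x : in_span S x -> spanI x.
Proof.
case=> s [c [hs ->]].
elim: s c hs => [|y s IH] c hs; first by rewrite big_ord0; constructor.
rewrite big_ord_recl (eq_bigr (fun i : 'I_(size s) => (behead c)`_i *: s`_i)); last first.
  by move=> i _; case: c {hs} => [|a c] /=; rewrite ?nth_nil.
apply: spanIc; first by apply: hs; rewrite inE eqxx.
by apply: IH => z hz; apply: hs; rewrite inE hz orbT.
Qed.

Lemma spanI_in x : spanI x -> in_span S x.
Proof.
elim=> [|y a w Sy _ [s [c [hs ->]]]].
  by exists [::], [::]; split => //; rewrite big_ord0.
exists (y :: s), (a :: c); split.
  by move=> z; rewrite inE => /orP [/eqP -> //|]; apply: hs.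
by rewrite big_ord_recl /=.
Qed.

Lemma spanI_gen y : S y -> spanI y.
Proof. by move=> h; rewrite -[y]addr0 -[y]scale1r; apply: spanIc => //; constructor. Qed.

Lemma spanID u w : spanI u -> spanI w -> spanI (u + w).
Proof.
elim=> [|y a u' Sy _ IH] hw; first by rewrite add0r.
by rewrite -addrA; apply: spanIc => //; apply: IH.
Qed.

Lemma spanIZ (b : CC) u : spanI u -> spanI (b *: u).
Proof.
elim=> [|y a u' Sy _ IH]; first by rewrite scaler0; constructor.
by rewrite scalerDr scalerA; apply: spanIc.
Qed.

Lemma spanIN u : spanI u -> spanI (- u).
Proof. by move=> h; rewrite -scaleN1r; apply: spanIZ. Qed.

Lemma spanIB u w : spanI u -> spanI w -> spanI (u - w).
Proof. by move=> h1 h2; apply: spanID => //; apply: spanIN. Qed.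

Lemma spanI_sum (I : eqType) (s : seq I) (F : I -> T) :
  (forall i, i \in s -> spanI (F i)) -> spanI (\sum_(i <- s) F i).
Proof.
elim: s => [|i s IH] h; first by rewrite big_nil; constructor.
rewrite big_cons; apply: spanID; first by apply: h; rewrite inE eqxx.
by apply: IH => j hj; apply: h; rewrite inE hj orbT.
Qed.

End Span.

Lemma span_induct (T : lmodType CC) (S : T -> Prop) (P : T -> Prop) :
  P 0 -> (forall u w, P u -> P w -> P (u + w)) -> (forall a u, P u -> P (a *: u)) ->
  (forall y, S y -> P y) -> forall x, spanI S x -> P x.
Proof. by move=> h0 hD hZ hS x; elim=> // y a w Sy _ Pw; apply: hD => //; apply: hZ; apply: hS. Qed.

Lemma spanI_map (n : nat) (S S' : 'cV[CC]_n -> Prop) (A : 'M[CC]_n) :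
  (forall y, S y -> spanI S' (A *m y)) -> forall w, spanI S w -> spanI S' (A *m w).
Proof.
move=> h w; elim=> [|y a w' Sy _ IH]; first by rewrite mulmx0; constructor.
by rewrite mulmxDr -scalemxAr; apply: spanID => //; apply: spanIZ; apply: h.
Qed.

Lemma spanI_mono (T : lmodType CC) (S S' : T -> Prop) :
  (forall y, S y -> spanI S' y) -> forall w, spanI S w -> spanI S' w.
Proof.
move=> h; apply: span_induct; [constructor| exact: spanID | exact: spanIZ | exact: h].
Qed.

Lemma sgnp_rev r (p : 'I_(r.*2)) : sgnp (rev_ord p) = - sgnp p.
Proof.
rewrite /sgnp /=; case: (ltnP p r) => h.
  by rewrite ifF //; apply/negbTE; rewrite -leqNgt; move: (ltn_ord p) h; lia.
by rewrite ifT ?opprK //; move: (ltn_ord p) h; lia.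
Qed.

Lemma sgnp_sq r (p : 'I_(r.*2)) : sgnp p * sgnp p = 1.
Proof. by rewrite /sgnp; case: ifP => _; rewrite ?mulr1 ?mulrNN ?mulr1. Qed.

Lemma sp0 r : is_sp (0 : 'M[CC]_(r.*2)).
Proof. by move=> p q; rewrite !mxE mulr0. Qed.

Lemma spD r (X Y : 'M[CC]_(r.*2)) : is_sp X -> is_sp Y -> is_sp (X + Y).
Proof. by move=> hX hY p q; rewrite !mxE hX hY mulrDr. Qed.

Lemma spZ r (a : CC) (X : 'M[CC]_(r.*2)) : is_sp X -> is_sp (a *: X).
Proof. by move=> hX p q; rewrite !mxE hX; ring. Qed.

Lemma spN r (X : 'M[CC]_(r.*2)) : is_sp X -> is_sp (- X).
Proof. by move=> h; rewrite -scaleN1r; apply: spZ. Qed.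

Lemma spB r (X Y : 'M[CC]_(r.*2)) : is_sp X -> is_sp Y -> is_sp (X - Y).
Proof. by move=> hX hY; apply: spD => //; apply: spN. Qed.

Lemma sp_sum r (I : eqType) (s : seq I) (F : I -> 'M[CC]_(r.*2)) :
  (forall i, i \in s -> is_sp (F i)) -> is_sp (\sum_(i <- s) F i).
Proof.
elim: s => [|i s IH] h; first by rewrite big_nil; apply: sp0.
rewrite big_cons; apply: spD; first by apply: h; rewrite inE eqxx.
by apply: IH => j hj; apply: h; rewrite inE hj orbT.
Qed.

Lemma sp_mul_key r (X Y : 'M[CC]_(r.*2)) : is_sp X -> is_sp Y ->
  forall p q, (X *m Y) p q = sgnp p * sgnp q * (Y *m X) (rev_ord q) (rev_ord p).
Proof.
move=> hX hY p q; rewrite !mxE (reindex_inj rev_ord_inj) /= mulr_sumr.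
apply: eq_bigr => k _; rewrite hX hY !rev_ordK.
have h := sgnp_sq (rev_ord k).
transitivity (sgnp p * sgnp q * (sgnp (rev_ord k) * sgnp (rev_ord k)) *
   (Y (rev_ord q) k * X k (rev_ord p))); first by ring.
by rewrite h mulr1.
Qed.

Lemma sp_bracket r (X Y : 'M[CC]_(r.*2)) : is_sp X -> is_sp Y ->
  is_sp (X *m Y - Y *m X).
Proof.
move=> hX hY p q.
have e : forall (M1 M2 : 'M[CC]_(r.*2)) a b, (M1 - M2) a b = M1 a b - M2 a b.
  by move=> M1 M2 a b; rewrite !mxE.
rewrite !e (sp_mul_key hX hY p q) (sp_mul_key hY hX p q); ring.
Qed.

Lemma ixS r i : ix r (Posz i.+1) = i.
Proof. by []. Qed.

Lemma ixNS r i : ix r (- Posz i.+1) = (r.*2 - i.+1)%N.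
Proof. by []. Qed.

Lemma E_mul r k l k' l' :
  E r k l *m E r k' l' = ((ix r l == ix r k') && (ix r l < r.*2)%N)%:R *: E r k l'.
Proof.
apply/matrixP => a b; rewrite !mxE.
case: (ltnP (ix r l) r.*2) => hl.
  rewrite (bigD1 (Ordinal hl)) //= big1 => [|c hc]; last first.
    rewrite !mxE; have -> : (nat_of_ord c == ix r l) = false.
      by apply/negbTE; apply: contra hc => /eqP h; apply/eqP; apply: val_inj.
    by rewrite andbF mul0r.
  rewrite !mxE eqxx addr0 andbT.
  by case: (_ == ix r k); case: (ix r l == _); case: (_ == ix r l'); rewrite /= ?mulr0 ?mul0r ?mulr1 ?mul1r.
rewrite andbF mul0r big1 // => c _; rewrite !mxE.
have -> : (nat_of_ord c == ix r l) = false.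
  by apply/negbTE; move: (ltn_ord c) hl; lia.
by rewrite andbF mul0r.
Qed.

Lemma E_delta r k l (p q : 'I_(r.*2)) : ix r k = p -> ix r l = q -> E r k l = delta_mx p q.
Proof. by move=> hk hl; apply/matrixP => a b; rewrite !mxE hk hl. Qed.

Section Rho.
Variables (r n : nat) (rho : 'M[CC]_(r.*2) -> 'M[CC]_n).
Hypothesis hrep : is_rep rho.

Lemma rho0 : rho 0 = 0.
Proof.
have := hrep.1 (-1) 0 0 (@sp0 r) (@sp0 r).
by rewrite scaler0 addr0 scaleN1r addNr.
Qed.

Lemma rhoZ a X : is_sp X -> rho (a *: X) = a *: rho X.
Proof. by move=> h; have := hrep.1 a X 0 h (@sp0 r); rewrite !addr0 rho0 addr0. Qed.

Lemma rhoD X Y : is_sp X -> is_sp Y -> rho (X + Y) = rho X + rho Y.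
Proof. by move=> hX hY; have := hrep.1 1 X Y hX hY; rewrite !scale1r. Qed.

Lemma rhoN X : is_sp X -> rho (- X) = - rho X.
Proof. by move=> h; rewrite -scaleN1r rhoZ // scaleN1r. Qed.

Lemma rhoB X Y : is_sp X -> is_sp Y -> rho (X - Y) = rho X - rho Y.
Proof. by move=> hX hY; rewrite rhoD ?rhoN //; apply: spN. Qed.

Lemma rho_br X Y : is_sp X -> is_sp Y -> rho (X *m Y - Y *m X) = rho X *m rho Y - rho Y *m rho X.
Proof. exact: hrep.2. Qed.

Lemma rho_sum (I : eqType) (s : seq I) (F : I -> 'M[CC]_(r.*2)) :
  (forall i, i \in s -> is_sp (F i)) -> rho (\sum_(i <- s) F i) = \sum_(i <- s) rho (F i).
Proof.
elim: s => [|i s IH] h; first by rewrite !big_nil rho0.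
have hs : forall j, j \in s -> is_sp (F j) by move=> j hj; apply: h; rewrite inE hj orbT.
rewrite !big_cons rhoD ?IH //; first by apply: h; rewrite inE eqxx.
exact: sp_sum.
Qed.

Lemma rho_comm X Y : is_sp X -> is_sp Y -> X *m Y = Y *m X -> rho X *m rho Y = rho Y *m rho X.
Proof.
move=> hX hY h; apply/eqP; rewrite -subr_eq0 -rho_br // h subrr rho0 //.
Qed.

End Rho.

Definition sidx (r p : nat) : int := if (p < r)%N then Posz p.+1 else - Posz (r.*2 - p).

Lemma ix_sidx r p : (p < r.*2)%N -> ix r (sidx r p) = p.
Proof.
rewrite /sidx; case: ifP => h hp; first by rewrite ixS.
have -> : (r.*2 - p = (r.*2 - p).-1.+1)%N by lia.
rewrite ixNS; lia.
Qed.

Lemma sidx_rev r (p : 'I_(r.*2)) : sidx r (rev_ord p) = - sidx r p.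
Proof.
rewrite /sidx /=; move: (ltn_ord p) => hp.
case: (ltnP p r) => h.
  rewrite ifF; last by apply/negbTE; lia.
  by congr (- Posz _); lia.
rewrite ifT; last by lia.
by rewrite opprK; congr Posz; lia.
Qed.

Definition Bm r (p q : 'I_(r.*2)) : 'M[CC]_(r.*2) :=
  delta_mx p q - (sgnp p * sgnp q) *: delta_mx (rev_ord q) (rev_ord p).

Lemma Bm_E r (p q : 'I_(r.*2)) :
  Bm p q = E r (sidx r p) (sidx r q) - (sgnp p * sgnp q) *: E r (- sidx r q) (- sidx r p).
Proof.
rewrite /Bm -(@E_delta r (sidx r p) (sidx r q) p q) ?ix_sidx //.
by rewrite -(@E_delta r (- sidx r q) (- sidx r p) (rev_ord q) (rev_ord p)) // -sidx_rev ix_sidx.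
Qed.

Lemma rev_ord_eq r (a b : 'I_r) : (rev_ord a == b) = (a == rev_ord b).
Proof.
apply/eqP/eqP => [<-|->]; by rewrite rev_ordK.
Qed.

Lemma tau_delta r (p q a b : 'I_(r.*2)) :
  - (sgnp a * sgnp b) * delta_mx p q (rev_ord b) (rev_ord a) =
  - (sgnp p * sgnp q) * delta_mx (rev_ord q) (rev_ord p) a b.
Proof.
rewrite !mxE !rev_ord_eq andbC.
case: (eqVneq a (rev_ord q)) => [->|ha]; case: (eqVneq b (rev_ord p)) => [->|hb] /=;
  rewrite ?mulr0 // !sgnp_rev; ring.
Qed.

Lemma B_sp r (p q : 'I_(r.*2)) : is_sp (Bm p q).
Proof.
move=> a b.
have e : forall (A B : 'M[CC]_(r.*2)) (c : CC), (A - c *: B) a b = A a b - c * B a b.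
  by move=> A B c; rewrite !mxE.
have e' : forall (A B : 'M[CC]_(r.*2)) (c : CC), (A - c *: B) (rev_ord b) (rev_ord a) =
   A (rev_ord b) (rev_ord a) - c * B (rev_ord b) (rev_ord a).
  by move=> A B c; rewrite !mxE.
rewrite /Bm e e' mulrBr tau_delta.
have t2 := tau_delta (rev_ord q) (rev_ord p) a b; rewrite !rev_ordK !sgnp_rev in t2.
rewrite mulrCA t2.
have h1 := sgnp_sq p; have h2 := sgnp_sq q.
transitivity ((sgnp p * sgnp p) * (sgnp q * sgnp q) * delta_mx p q a b - sgnp p * sgnp q * delta_mx (rev_ord q) (rev_ord p) a b).
  by rewrite h1 h2 !mul1r.
ring.
Qed.

Lemma sp_decomp r (X : 'M[CC]_(r.*2)) : is_sp X ->
  X = \sum_(p < r.*2) \sum_(q < r.*2) (X p q / 2) *: Bm p q.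
Proof.
move=> hX.
have e1 : \sum_(p < r.*2) \sum_(q < r.*2) (X p q / 2) *: Bm p q =
   (2^-1 : CC) *: (\sum_(p < r.*2) \sum_(q < r.*2) X p q *: delta_mx p q)
 - (2^-1 : CC) *: (\sum_(p < r.*2) \sum_(q < r.*2) (X p q * (sgnp p * sgnp q)) *: delta_mx (rev_ord q) (rev_ord p)).
  rewrite !scaler_sumr -sumrB; apply: eq_bigr => p _.
  rewrite !scaler_sumr -sumrB; apply: eq_bigr => q _.
  rewrite /Bm scalerBr !scalerA; congr (_ *: _ - _ *: _); ring.
have e2 : \sum_(p < r.*2) \sum_(q < r.*2) (X p q * (sgnp p * sgnp q)) *: delta_mx (rev_ord q) (rev_ord p) = - X.
  rewrite exchange_big /= (reindex_inj rev_ord_inj) /=.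
  rewrite [in RHS](matrix_sum_delta X) -sumrN; apply: eq_bigr => a _.
  rewrite (reindex_inj rev_ord_inj) /= -sumrN; apply: eq_bigr => b _.
  rewrite !rev_ordK -scaleNr; congr (_ *: _).
  rewrite (hX (rev_ord b) (rev_ord a)) !rev_ordK !sgnp_rev.
  have h1 := sgnp_sq a; have h2 := sgnp_sq b.
  transitivity (- (sgnp a * sgnp a) * (sgnp b * sgnp b) * X a b); first by ring.
  by rewrite h1 h2; ring.
rewrite e1 e2 -matrix_sum_delta scalerN opprK -scalerDl.
have -> : (2^-1 + 2^-1 : CC) = 1.
  by rewrite [RHS](splitr 1) mul1r.
by rewrite scale1r.
Qed.

Definition lowstrict r (X : 'M[CC]_(r.*2)) := forall p q : 'I_(r.*2), (p <= q)%N -> X p q = 0.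
Definition upper r (X : 'M[CC]_(r.*2)) := forall p q : 'I_(r.*2), (q < p)%N -> X p q = 0.

Lemma low0 r : lowstrict (0 : 'M[CC]_(r.*2)).
Proof. by move=> p q _; rewrite mxE. Qed.
Lemma lowD r (X Y : 'M[CC]_(r.*2)) : lowstrict X -> lowstrict Y -> lowstrict (X + Y).
Proof. by move=> hX hY p q h; rewrite mxE hX ?hY ?addr0. Qed.
Lemma lowZ r a (X : 'M[CC]_(r.*2)) : lowstrict X -> lowstrict (a *: X).
Proof. by move=> hX p q h; rewrite mxE hX ?mulr0. Qed.
Lemma lowN r (X : 'M[CC]_(r.*2)) : lowstrict X -> lowstrict (- X).
Proof. by move=> h; rewrite -scaleN1r; apply: lowZ. Qed.
Lemma lowB r (X Y : 'M[CC]_(r.*2)) : lowstrict X -> lowstrict Y -> lowstrict (X - Y).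
Proof. by move=> hX hY; apply: lowD => //; apply: lowN. Qed.
Lemma lowM r (X Y : 'M[CC]_(r.*2)) : lowstrict X -> lowstrict Y -> lowstrict (X *m Y).
Proof.
move=> hX hY p q h; rewrite mxE big1 // => k _.
case: (ltnP k p) => hk; last by rewrite hX ?mul0r.
by rewrite hY ?mulr0 //; apply: leq_trans h; apply: ltnW.
Qed.
Lemma low_br r (X Y : 'M[CC]_(r.*2)) : lowstrict X -> lowstrict Y -> lowstrict (X *m Y - Y *m X).
Proof. by move=> hX hY; apply: lowB; apply: lowM. Qed.

Lemma B_low r (p q : 'I_(r.*2)) : (q < p)%N -> lowstrict (Bm p q).
Proof.
move=> hqp a b hab; rewrite !mxE.
have -> : (a == p) && (b == q) = false.
  by apply/negbTE; apply/andP => [[/eqP ha /eqP hb]]; move: hab hqp; rewrite ha hb; lia.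
have -> : (a == rev_ord q) && (b == rev_ord p) = false.
  apply/negbTE; apply/andP => [[/eqP ha /eqP hb]]; move: hab hqp; rewrite ha hb /=.
  move: (ltn_ord p) (ltn_ord q); lia.
by rewrite mulr0 subr0.
Qed.

Definition lowpart r (X : 'M[CC]_(r.*2)) : 'M[CC]_(r.*2) :=
  \matrix_(p, q) (if (q < p)%N then X p q else 0).
Definition uppart r (X : 'M[CC]_(r.*2)) : 'M[CC]_(r.*2) :=
  \matrix_(p, q) (if (q < p)%N then 0 else X p q).

Lemma low_up r (X : 'M[CC]_(r.*2)) : X = lowpart X + uppart X.
Proof. by apply/matrixP => p q; rewrite !mxE; case: ifP; rewrite ?addr0 ?add0r. Qed.

Lemma lowpart_low r (X : 'M[CC]_(r.*2)) : lowstrict (lowpart X).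
Proof. by move=> p q h; rewrite mxE ifF //; apply/negbTE; rewrite -leqNgt. Qed.

Lemma uppart_up r (X : 'M[CC]_(r.*2)) : upper (uppart X).
Proof. by move=> p q h; rewrite mxE h. Qed.

Lemma rev_lt r (p q : 'I_(r.*2)) : (rev_ord q < rev_ord p)%N = (p < q)%N.
Proof. rewrite /=; move: (ltn_ord p) (ltn_ord q); lia. Qed.

Lemma lowpart_sp r (X : 'M[CC]_(r.*2)) : is_sp X -> is_sp (lowpart X).
Proof. by move=> h p q; rewrite !mxE rev_lt; case: ifP => _; rewrite ?(h p q) ?mulr0. Qed.

Lemma uppart_sp r (X : 'M[CC]_(r.*2)) : is_sp X -> is_sp (uppart X).
Proof. by move=> h p q; rewrite !mxE rev_lt; case: ifP => _; rewrite ?(h p q) ?mulr0. Qed.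

Lemma sgnp_lt r (p : 'I_(r.*2)) : (p < r)%N -> sgnp p = 1.
Proof. by rewrite /sgnp => ->. Qed.
Lemma sgnp_ge r (p : 'I_(r.*2)) : (r <= p)%N -> sgnp p = -1.
Proof. by rewrite /sgnp leqNgt => /negbTE ->. Qed.
Lemma sidx_lt r (p : nat) : (p < r)%N -> sidx r p = Posz p.+1.
Proof. by rewrite /sidx => ->. Qed.
Lemma sidx_ge r (p : nat) : (r <= p)%N -> sidx r p = - Posz (r.*2 - p).
Proof. by rewrite /sidx leqNgt => /negbTE ->. Qed.

Lemma half_eq (T : lmodType CC) (X : T) : X = 2^-1 *: (X + X).
Proof.
rewrite scalerDr -scalerDl.
have -> : (2^-1 + 2^-1 : CC) = 1 by rewrite [RHS](splitr 1) mul1r.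
by rewrite scale1r.
Qed.

Lemma half_sp r (X : 'M[CC]_(r.*2)) : is_sp (X + X) -> is_sp X.
Proof. by move=> h; rewrite [X]half_eq; apply: spZ. Qed.
Lemma half_low r (X : 'M[CC]_(r.*2)) : lowstrict (X + X) -> lowstrict X.
Proof. by move=> h; rewrite [X]half_eq; apply: lowZ. Qed.

Lemma Bm_pp r (p q : 'I_(r.*2)) : (p < r)%N -> (q < r)%N ->
  Bm p q = E r (Posz p.+1) (Posz q.+1) - E r (- Posz q.+1) (- Posz p.+1).
Proof. by move=> hp hq; rewrite Bm_E (sidx_lt hp) (sidx_lt hq) (sgnp_lt hp) (sgnp_lt hq) mulr1 scale1r. Qed.

Lemma Bm_pn r (p q : 'I_(r.*2)) : (p < r)%N -> (r <= q)%N ->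
  Bm p q = E r (Posz p.+1) (- Posz (r.*2 - q)) + E r (Posz (r.*2 - q)) (- Posz p.+1).
Proof.
by move=> hp hq; rewrite Bm_E (sidx_lt hp) (sidx_ge hq) (sgnp_lt hp) (sgnp_ge hq) opprK mul1r scaleN1r opprK.
Qed.

Lemma Bm_np r (p q : 'I_(r.*2)) : (r <= p)%N -> (q < r)%N ->
  Bm p q = E r (- Posz (r.*2 - p)) (Posz q.+1) + E r (- Posz q.+1) (Posz (r.*2 - p)).
Proof.
by move=> hp hq; rewrite Bm_E (sidx_lt hq) (sidx_ge hp) (sgnp_lt hq) (sgnp_ge hp) opprK mulr1 scaleN1r opprK.
Qed.

Lemma Bm_nn r (p q : 'I_(r.*2)) : (r <= p)%N -> (r <= q)%N ->
  Bm p q = E r (- Posz (r.*2 - p)) (- Posz (r.*2 - q)) - E r (Posz (r.*2 - q)) (Posz (r.*2 - p)).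
Proof.
by move=> hp hq; rewrite Bm_E (sidx_ge hp) (sidx_ge hq) (sgnp_ge hp) (sgnp_ge hq) !opprK mulrNN mulr1 scale1r.
Qed.

Section Classify.
Variables (r n : nat) (rho : 'M[CC]_(r.*2) -> 'M[CC]_n).
Hypothesis hrep : is_rep rho.
Variables (m : nat -> nat) (v : 'cV[CC]_n).
Hypothesis hw : highest_weight_vector rho m v.

Lemma Bm_up (p q : 'I_(r.*2)) : (p <= q)%N -> exists c : CC, rho (Bm p q) *m v = c *: v.
Proof.
case: hw => _ hh hxp hxpb hpq.
have hB := B_sp p q.
move: (ltn_ord p) (ltn_ord q) => hp2 hq2.
case: (ltnP p r) => hp; case: (ltnP q r) => hq.
- move: hB; rewrite Bm_pp // => hB.
  case: (ltngtP p q) => hpq'; last 1 first.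
  + rewrite hpq'; exists (\sum_(q.+1 <= j < r.+1) m j)%:R.
    by apply: hh; lia.
  + exists 0; rewrite scale0r.
    by apply: (hxp p.+1 q.+1); lia.
  + lia.
- move: hB; rewrite Bm_pn // => hB.
  set j := (r.*2 - q)%N in hB *.
  have hj : (1 <= j <= r)%N by rewrite /j; lia.
  exists 0; rewrite scale0r.
  case: (ltngtP p.+1 j) => hij.
  + have -> : E r (Posz p.+1) (- Posz j) + E r (Posz j) (- Posz p.+1) = xpbar r p.+1 j.
      by rewrite /xpbar ifF //; apply/negbTE; lia.
    by apply: hxpb; lia.
  + have -> : E r (Posz p.+1) (- Posz j) + E r (Posz j) (- Posz p.+1) = xpbar r j p.+1.
      rewrite /xpbar ifF; [exact: addrC | apply/negbTE; lia].
    by apply: hxpb; lia.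
  + rewrite hij in hB *.
    have e : xpbar r j j = E r (Posz j) (- Posz j) by rewrite /xpbar eqxx.
    have hX : is_sp (xpbar r j j) by apply: half_sp; rewrite e.
    rewrite -e rhoD // mulmxDl.
    by rewrite (hxpb j j) ?addr0 //; lia.
- lia.
- move: hB; rewrite Bm_nn // => hB.
  set i := (r.*2 - p)%N in hB *; set j := (r.*2 - q)%N in hB *.
  have hi : (1 <= i <= r)%N by rewrite /i; lia.
  have hj : (j <= i)%N by rewrite /i /j; lia.
  have hj1 : (1 <= j)%N by rewrite /j; lia.
  case: (ltngtP j i) => hij.
  + have -> : E r (- Posz i) (- Posz j) - E r (Posz j) (Posz i) = - xp r j i.
      by rewrite /xp opprB.
    have hX : is_sp (xp r j i).
      have -> : xp r j i = - (E r (- Posz i) (- Posz j) - E r (Posz j) (Posz i)) by rewrite /xp opprB.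
      by apply: spN.
    exists 0; rewrite scale0r rhoN // mulNmx (hxp j i) ?oppr0 //; lia.
  + lia.
  + rewrite hij in hB *.
    have hX : is_sp (hcar r i).
      have -> : hcar r i = - (E r (- Posz i) (- Posz i) - E r (Posz i) (Posz i)) by rewrite /hcar opprB.
      by apply: spN.
    have -> : E r (- Posz i) (- Posz i) - E r (Posz i) (Posz i) = - hcar r i.
      by rewrite /hcar opprB.
    exists (- (\sum_(i <= j0 < r.+1) m j0)%:R).
    by rewrite rhoN // mulNmx hh // scaleNr.
Qed.

End Classify.

Lemma ixP r i : (0 < i)%N -> ix r (Posz i) = i.-1.
Proof. by case: i. Qed.
Lemma ixN r i : (0 < i)%N -> ix r (- Posz i) = (r.*2 - i)%N.
Proof. by case: i. Qed.

Lemma E_entry0 r k l (a b : 'I_(r.*2)) :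
  (nat_of_ord a != ix r k) || (nat_of_ord b != ix r l) -> E r k l a b = 0.
Proof. by rewrite mxE => /orP [/negbTE ->|/negbTE ->]; rewrite ?andbF. Qed.

Lemma gen_nm r (y : 'M[CC]_(r.*2)) : nminus_gen y -> nminus y.
Proof. by move=> h; apply: spanI_in; apply: spanI_gen. Qed.

Lemma two_scale (T : lmodType CC) (X : T) : X + X = 2%:R *: X.
Proof. by rewrite scaler_nat mulr2n. Qed.

Section Low.
Variable r : nat.

Lemma Bm_low (p q : 'I_(r.*2)) : (q < p)%N ->
  (exists (c : CC) (y : 'M[CC]_(r.*2)), nminus y /\ Bm p q = c *: y) \/
  (exists (c : CC) i, (1 <= i <= r)%N /\ Bm p q = c *: xmr r i).
Proof.
move=> hqp; move: (ltn_ord p) (ltn_ord q) => hp2 hq2.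
case: (ltnP p r) => hp; case: (ltnP q r) => hq.
- left; exists 1, (xm r q.+1 p.+1); split; last by rewrite scale1r Bm_pp.
  by apply: gen_nm; exists q.+1, p; split; [lia|lia|lia|left].
- lia.
- rewrite Bm_np //; set i := (r.*2 - p)%N.
  have hi : (1 <= i <= r)%N by rewrite /i; lia.
  case: (ltngtP q.+1 i) => hij.
  + have -> : E r (- Posz i) (Posz q.+1) + E r (- Posz q.+1) (Posz i) = xmbar r q.+1 i.
      by rewrite /xmbar ifF //; apply/negbTE; lia.
    case: (ltnP i r) => hir.
    * left; exists 1, (xmbar r q.+1 i); split; last by rewrite scale1r.
      by apply: gen_nm; exists q.+1, i; split; [lia|lia|lia|right].
    * right; exists 1, q.+1; split; first by lia.
      by rewrite scale1r /xmr (_ : i = r) //; lia.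
  + have -> : E r (- Posz i) (Posz q.+1) + E r (- Posz q.+1) (Posz i) = xmbar r i q.+1.
      by rewrite /xmbar ifF; [exact: addrC | apply/negbTE; lia].
    case: (ltnP q.+1 r) => hjr.
    * left; exists 1, (xmbar r i q.+1); split; last by rewrite scale1r.
      by apply: gen_nm; exists i, q.+1; split; [lia|lia|lia|right].
    * right; exists 1, i; split; first by lia.
      by rewrite scale1r /xmr (_ : q.+1 = r) //; lia.
  + rewrite -hij two_scale.
    have -> : E r (- Posz q.+1) (Posz q.+1) = xmbar r q.+1 q.+1 by rewrite /xmbar eqxx.
    case: (ltnP q.+1 r) => hjr.
    * left; exists 2%:R, (xmbar r q.+1 q.+1); split => //.
      by apply: gen_nm; exists q.+1, q.+1; split; [lia|lia|lia|right].
    * right; exists 2%:R, q.+1; split; first by lia.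
      by rewrite /xmr (_ : q.+1 = r) //; lia.
- rewrite Bm_nn //; set i := (r.*2 - p)%N; set j := (r.*2 - q)%N.
  have hij : (1 <= i < j)%N by rewrite /i /j; lia.
  have hjr : (j <= r)%N by rewrite /j; lia.
  left; exists (-1), (xm r i j); split; last by rewrite scaleN1r /xm opprB.
  apply: gen_nm; exists i, j.-1; split; [lia | lia | lia | left].
  by rewrite prednK //; lia.
Qed.

Lemma gen_sp_low (y : 'M[CC]_(r.*2)) : nminus_gen y -> is_sp y /\ lowstrict y.
Proof.
case=> [[|i]] [j] [hi hij hjr hy] //.
have hjr2 : (j < r.*2)%N by lia.
have hir2 : (i < r.*2)%N by lia.
case: hy => ->.
- have hqp : (i < j)%N by lia.
  have e : xm r i.+1 j.+1 = Bm (Ordinal hjr2) (Ordinal hir2).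
    by rewrite Bm_pp //=; lia.
  by rewrite e; split; [apply: B_sp | apply: B_low].
- have hp : (r.*2 - j < r.*2)%N by lia.
  have hqp : (i < r.*2 - j)%N by lia.
  have ee : (r.*2 - (r.*2 - j))%N = j by lia.
  have e : Bm (Ordinal hp) (Ordinal hir2) = E r (- Posz j) (Posz i.+1) + E r (- Posz i.+1) (Posz j).
    by rewrite Bm_np /= ?ee //; lia.
  case: (eqVneq i.+1 j) => hij'.
  + have ex : xmbar r i.+1 j = E r (- Posz i.+1) (Posz i.+1) by rewrite /xmbar hij' eqxx.
    have e2 : Bm (Ordinal hp) (Ordinal hir2) = xmbar r i.+1 j + xmbar r i.+1 j by rewrite e ex -hij'.
    by split; [apply: half_sp | apply: half_low]; rewrite -e2; [apply: B_sp | apply: B_low].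
  + have ex : xmbar r i.+1 j = Bm (Ordinal hp) (Ordinal hir2) by rewrite e /xmbar (negbTE hij').
    by rewrite ex; split; [apply: B_sp | apply: B_low].
Qed.

Lemma nminus_sp_low (y : 'M[CC]_(r.*2)) : nminus y -> is_sp y /\ lowstrict y.
Proof.
move=> /in_spanI; move: y; apply: (@span_induct _ _ (fun y => is_sp y /\ lowstrict y)).
- by split; [apply: sp0 | apply: low0].
- by move=> u w [h1 h2] [h3 h4]; split; [apply: spD | apply: lowD].
- by move=> a u [h1 h2]; split; [apply: spZ | apply: lowZ].
- exact: gen_sp_low.
Qed.

Lemma xmr_sp i : (1 <= i <= r)%N -> is_sp (xmr r i).
Proof.
move=> hi.
have hp : (r < r.*2)%N by lia.
have hq : (i.-1 < r.*2)%N by lia.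
have ee : (r.*2 - r)%N = r by lia.
have e : Bm (Ordinal hp) (Ordinal hq) = E r (- Posz r) (Posz i) + E r (- Posz i) (Posz r).
  by rewrite Bm_np /= ?ee ?prednK //; lia.
case: (eqVneq i r) => hir.
- have ex : xmr r i = E r (- Posz r) (Posz r) by rewrite /xmr /xmbar hir eqxx.
  have e2 : Bm (Ordinal hp) (Ordinal hq) = E r (- Posz r) (Posz r) + E r (- Posz r) (Posz r) by rewrite e hir.
  by rewrite ex; apply: half_sp; rewrite -e2; apply: B_sp.
- have ex : xmr r i = Bm (Ordinal hp) (Ordinal hq) by rewrite e /xmr /xmbar (negbTE hir).
  rewrite ex; apply: B_sp.
Qed.

Definition LL (X : 'M[CC]_(r.*2)) := forall a b : 'I_(r.*2), (a < r)%N || (r <= b)%N -> X a b = 0.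

Lemma LL_mul X Y : LL X -> LL Y -> X *m Y = 0.
Proof.
move=> hX hY; apply/matrixP => a b; rewrite !mxE big1 // => k _.
case: (ltnP k r) => hk; first by rewrite (hY k b) ?hk ?mulr0.
by rewrite (hX a k) ?hk ?orbT ?mul0r.
Qed.

Lemma xmr_LL i : (1 <= i <= r)%N -> LL (xmr r i).
Proof.
move=> hi a b hab; rewrite /xmr /xmbar.
case: ifP => _.
  by apply: E_entry0; rewrite ixN ?ixP; lia.
by rewrite mxE !E_entry0 ?addr0 // ixN ?ixP; lia.
Qed.

End Low.

Section Decomp.
Variables (r n : nat) (rho : 'M[CC]_(r.*2) -> 'M[CC]_n).
Hypothesis hrep : is_rep rho.

Lemma rho_decomp X (u : 'cV[CC]_n) : is_sp X ->
  rho X *m u = \sum_(p < r.*2) \sum_(q < r.*2) (X p q / 2) *: (rho (Bm p q) *m u).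
Proof.
move=> hX; rewrite {1}(sp_decomp hX) rho_sum //; last first.
  by move=> p _; apply: sp_sum => q _; apply: spZ; apply: B_sp.
rewrite mulmx_suml; apply: eq_bigr => p _.
rewrite rho_sum //; last by move=> q _; apply: spZ; apply: B_sp.
rewrite mulmx_suml; apply: eq_bigr => q _.
rewrite (rhoZ hrep); last by apply: B_sp.
by rewrite scalemxAl.
Qed.

Lemma subsp_sum (P : 'cV[CC]_n -> Prop) (I : Type) (s : seq I) (F : I -> 'cV[CC]_n) :
  is_subspace P -> (forall i, P (F i)) -> P (\sum_(i <- s) F i).
Proof.
case=> h0 hD hZ hF; elim: s => [|i s IH]; first by rewrite big_nil.
by rewrite big_cons; apply: hD.
Qed.

Lemma lower_apply (P : 'cV[CC]_n -> Prop) L u :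
  is_subspace P -> is_sp L -> lowstrict L ->
  (forall y : 'M[CC]_(r.*2), nminus y -> P (rho y *m u)) ->
  (forall i, (1 <= i <= r)%N -> P (rho (xmr r i) *m u)) ->
  P (rho L *m u).
Proof.
move=> hP hL hLl hy hx; rewrite rho_decomp //.
have [h0 hD hZ] := hP.
apply: subsp_sum => // p; apply: subsp_sum => // q.
case: (ltnP q p) => hqp; last by rewrite hLl // mul0r scale0r.
apply: (hZ); case: (Bm_low hqp) => [[c [y [hy' ->]]]|[c [i [hi ->]]]].
- rewrite (rhoZ hrep); last exact: (nminus_sp_low hy').1.
  rewrite (_ : (c *: rho y) *m u = c *: (rho y *m u)); last by rewrite scalemxAl.
  by apply: (hZ); apply: hy.
- rewrite (rhoZ hrep); last exact: xmr_sp.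
  rewrite (_ : (c *: rho (xmr r i)) *m u = c *: (rho (xmr r i) *m u)); last by rewrite scalemxAl.
  by apply: (hZ); apply: hx.
Qed.

End Decomp.

Lemma mpowE n (A : 'M[CC]_n) k : mpow A k = A ^+ k.
Proof. by elim: k => [|k IH]; rewrite ?expr0 ?idmxE // /mpow iterS -/(mpow A k) IH exprS mulmxE. Qed.

Lemma mulmxMn n p (A : 'M[CC]_n) (u : 'M[CC]_(n, p)) k : (A *+ k) *m u = (A *m u) *+ k.
Proof. by elim: k => [|k IH]; rewrite ?mulr0n ?mul0mx // !mulrS mulmxDl IH. Qed.

Lemma mul1mxr n p (u : 'M[CC]_(n, p)) : (1 : 'M[CC]_n) *m u = u.
Proof. by rewrite -idmxE mul1mx. Qed.

Section SL2.
Variable n : nat.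
Implicit Types E F H : 'M[CC]_n.

Lemma natr_neq (a b : nat) : a != b -> (a%:R : CC) != b%:R.
Proof. by move=> h; rewrite eqr_nat. Qed.

Lemma sl2_kill E F H (v : 'cV[CC]_n) (k : nat) :
  E * F - F * E = H -> H * F - F * H = - (F *+ 2) ->
  E *m v = 0 -> H *m v = k%:R *: v -> (F ^+ k.+1) *m v = 0.
Proof.
move=> hEF hHF hEv hHv.
pose w j := (F ^+ j) *m v.
have wS : forall j, w j.+1 = F *m w j by move=> j; rewrite /w exprS -mulmxE mulmxA.
have hH : forall j, H *m w j = (k%:R - (j.*2)%:R) *: w j.
  elim=> [|j IH]; first by rewrite /w expr0 mul1mxr hHv subr0.
  have e : H * F = F * H - F *+ 2 by rewrite -hHF; rewrite addrC subrK.
  rewrite wS mulmxA mulmxE e mulmxBl mulmxMn -mulmxE -mulmxA IH -scalemxAr.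
  rewrite -[F *m w j *+ 2]scaler_nat -scalerBl; congr (_ *: _).
  by rewrite doubleS -!natr1; ring.
have hE : forall j, E *m w j.+1 = (j.+1%:R * (k%:R - j%:R)) *: w j.
  have e : E * F = F * E + H by rewrite -hEF addrC subrK.
  elim=> [|j IH].
    by rewrite wS mulmxA mulmxE e mulmxDl -mulmxE -mulmxA /w expr0 !mul1mxr hEv mulmx0 add0r hHv subr0 mul1r.
  rewrite wS mulmxA mulmxE e mulmxDl -mulmxE -mulmxA IH hH -scalemxAr -wS -scalerDl.
  congr (_ *: _); rewrite -!muln2 !natrM -!natr1; ring.
apply/eqP/negPn/negP => hW.
have hnz : forall d, w (k.+1 + d)%N != 0.
  elim=> [|d IH]; first by rewrite addn0.
  apply/negP => /eqP h0; move: (hE (k.+1 + d)%N); rewrite -addnS h0 mulmx0 => /esym/eqP.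
  rewrite scaler_eq0 (negbTE IH) orbF mulf_eq0 pnatr_eq0 /= subr_eq0 eqr_nat.
  by apply/negP; lia.
pose mu d : CC := k%:R - ((k.+1 + d).*2)%:R.
have hroot : forall d, root (char_poly H^T) (mu d).
  move=> d; rewrite -eigenvalue_root_char; apply/eigenvalueP.
  exists (w (k.+1 + d)%N)^T; last by rewrite trmx_eq0.
  by rewrite -trmx_mul hH /mu linearZ.
have hnz0 : char_poly H^T != 0 by apply: monic_neq0; apply: char_poly_monic.
pose rs := [seq mu d | d <- iota 0 n.+1].
have hall : all (root (char_poly H^T)) rs by apply/allP => x /mapP [d _ ->]; apply: hroot.
have huniq : uniq rs.
  rewrite map_inj_uniq ?iota_uniq // => a b; rewrite /mu => /addrI /oppr_inj /eqP.
  by rewrite eqr_nat => /eqP; lia.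
have := max_poly_roots hnz0 hall huniq.
by rewrite size_map size_iota size_char_poly ltnn.
Qed.
End SL2.

Lemma pow_shift (R : pzRingType) (F A D : R) :
  F * A = A * F + D -> GRing.comm A D -> forall k, F * A ^+ k = A ^+ k * F + (D * A ^+ k.-1) *+ k.
Proof.
move=> h hc; elim=> [|k IH]; first by rewrite expr0 mulr1 mul1r mulr0n addr0.
have e : F * A ^+ k.+1 = A ^+ k.+1 * F + (A * (D * A ^+ k.-1)) *+ k + D * A ^+ k.
  rewrite exprS mulrA h mulrDl -[A * F * _]mulrA IH mulrDr mulrnAr.
  by rewrite [A * (A ^+ k * F)]mulrA -exprS.
rewrite e -addrA; congr (_ + _).
clear IH e; case: k => [|k] /=.
  by rewrite mulr0n add0r mulr1n.
by rewrite [A * (D * _)]mulrA hc -[D * A * _]mulrA -exprS -mulrSr.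
Qed.

Lemma shift_mul (R : pzRingType) (F Y D W : R) : F * Y = Y * F + D -> F * (Y * W) = Y * (F * W) + D * W.
Proof. by move=> h; rewrite mulrA h mulrDl -mulrA. Qed.

Section Heis.
Variables (n : nat) (F A1 A2 X C : 'M[CC]_n) (v : 'cV[CC]_n) (m : nat).
Hypotheses (hFA2 : F * A2 = A2 * F - A1) (hFA1 : F * A1 = A1 * F + C).
Hypotheses (hCF : GRing.comm C F) (hCA1 : GRing.comm A1 C) (hCA2 : GRing.comm C A2) (hCX : GRing.comm C X).
Hypotheses (hFX : GRing.comm F X) (hA12 : GRing.comm A2 A1) (hA1X : GRing.comm A1 X) (hA2X : GRing.comm A2 X).
Hypothesis hv : (F ^+ m.+1) *m v = 0.
Variable Z : 'cV[CC]_n -> Prop.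
Hypotheses (hZ : is_subspace Z) (hZF : forall w, Z w -> Z (F *m w)) (hZC : forall w, Z w -> Z (C *m w)).
Hypothesis hgen : forall j l, (j <= m)%N -> Z ((A1 ^+ j * (A2 ^+ l * X)) *m v).

Definition Op p k l i := C ^+ p * (A1 ^+ k * (A2 ^+ l * (X * F ^+ i))).

Lemma Op_shift p k l i :
  F * Op p k l i = Op p k l i.+1 + Op p.+1 k.-1 l i *+ k - Op p k.+1 l.-1 i *+ l.
Proof.
have h1 : F * C ^+ p = C ^+ p * F.
  by have := commrX p (commr_sym hCF).
have h2 := pow_shift hFA1 hCA1 k.
have h3 : F * A2 ^+ l = A2 ^+ l * F + (- A1 * A2 ^+ l.-1) *+ l.
  by apply: pow_shift => //; apply: commrN; apply: hA12.
rewrite /Op mulrA h1 -mulrA (shift_mul _ h2) (shift_mul _ h3) [F * (X * _)]mulrA hFX -[X * F * _]mulrA -exprS.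
rewrite !mulrDr !mulrnAl !mulrnAr !mulNr !mulrN !mulNrn !mulrA !exprSr !mulrA.
by rewrite addrAC.
Qed.

Lemma Z_mulmx_pow (P : 'M[CC]_n) (hP : forall w, Z w -> Z (P *m w)) j w : Z w -> Z ((P ^+ j) *m w).
Proof.
elim: j => [|j IH] hw; first by rewrite expr0 mul1mxr.
by rewrite exprS -mulmxE -mulmxA; apply: (hP); apply: IH.
Qed.

Lemma Z_natmul w k : Z w -> Z (w *+ k).
Proof.
case: hZ => h0 hD hS hw; elim: k => [|k IH]; first by rewrite mulr0n.
by rewrite mulrS; apply: (hD).
Qed.

Lemma Z_opp w : Z w -> Z (- w).
Proof. by case: hZ => h0 hD hS hw; rewrite -scaleN1r; apply: (hS). Qed.

Lemma Op_Q i : forall p j l, (j + i <= m)%N -> Z (Op p j l i *m v).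
Proof.
case: (hZ) => h0 hD hS.
elim: i => [|i IH] p j l hji.
  rewrite /Op expr0 mulr1 -mulmxE -mulmxA; apply: Z_mulmx_pow => //.
  by apply: (hgen); lia.
have e := Op_shift p j l i.
have -> : Op p j l i.+1 = F * Op p j l i - Op p.+1 j.-1 l i *+ j + Op p j.+1 l.-1 i *+ l.
  by rewrite e addrAC subrK addrK.
rewrite !mulmxDl -mulmxE -mulmxA mulmxMn mulNmx mulmxMn.
apply: (hD); first apply: (hD).
- by apply: (hZF); apply: (IH); lia.
- by apply: Z_opp; apply: Z_natmul; apply: (IH); lia.
- by apply: Z_natmul; apply: (IH); lia.
Qed.

Lemma Op_all K : forall p l i, Z (Op p K l i *m v).
Proof.
case: (hZ) => h0 hD hS.
elim: K {-2}K (leqnn K) => [|N IHN] K hK p l i.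
  case: (leqP (K + i) m) => hKi; first by apply: Op_Q.
  have -> : K = 0%N by lia.
  have -> : Op p 0 l i *m v = (C ^+ p * (A1 ^+ 0 * (A2 ^+ l * (X * F ^+ (i - m.+1))))) *m (F ^+ m.+1 *m v).
    rewrite mulmxA mulmxE; congr (_ *m _).
    by rewrite /Op -!mulrA -exprD subnK //; lia.
  by rewrite hv mulmx0.
case: (leqP (K + i) m) => hKi; first by apply: Op_Q.
case: K hK hKi => [|K] hK hKi.
  by apply: (IHN).
have e := Op_shift p K l.+1 i.
have e2 : Op p K.+1 l i *+ l.+1 = Op p K l.+1 i.+1 + Op p.+1 K.-1 l.+1 i *+ K - F * Op p K l.+1 i.
  by rewrite e opprB addrC subrK.
have e3 : Op p K.+1 l i *m v = (l.+1%:R)^-1 *: ((Op p K.+1 l i *+ l.+1) *m v).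
  rewrite mulmxMn -[(Op p K.+1 l i *m v) *+ l.+1]scaler_nat scalerA mulVf ?scale1r //.
  by rewrite pnatr_eq0.
have hKN : (K <= N)%N by lia.
have hKN' : (K.-1 <= N)%N by lia.
rewrite e3; apply: (hS); rewrite e2 !mulmxDl mulNmx !mulmxMn.
apply: (hD); first apply: (hD).
- exact: (IHN K hKN p l.+1 i.+1).
- by apply: Z_natmul; exact: (IHN K.-1 hKN' p.+1 l.+1 i).
- apply: Z_opp; rewrite -mulmxE -mulmxA; apply: (hZF); exact: (IHN K hKN p l.+1 i).
Qed.

Lemma heis_all k l : Z ((A1 ^+ k * (A2 ^+ l * X)) *m v).
Proof.
have := Op_all k 0 l 0.
by rewrite /Op expr0 mul1r mulr1.
Qed.

End Heis.

Ltac dec1 :=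
  match goal with
  | |- context [@eq_op ?T ?a ?b] =>
      lazymatch type of a with nat =>
      first [ rewrite (_ : (a == b) = true); last by apply/eqP; lia
            | rewrite (_ : (a == b) = false); last by apply/negbTE/eqP; lia ] end
  | |- context [leq ?a ?b] =>
      first [ rewrite (_ : (leq a b) = true); last by lia
            | rewrite (_ : (leq a b) = false); last by apply/negbTE; lia ]
  end.

Ltac Eexpand := rewrite ?(mulmxDl, mulmxDr, mulmxBl, mulmxBr, mulNmx, mulmxN, E_mul) ?ixS ?ixNS.
Ltac Efinish := repeat dec1; apply/matrixP => a b; rewrite !mxE /=;
  repeat match goal with |- context [ @Algebra.natmul ?R ?one (nat_of_bool ?x) ] =>
    generalize (@Algebra.natmul R one (nat_of_bool x)); intro end.

Section Brackets.
Variable r' : nat.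
Local Notation r := r'.+2.

Definition f1 := xm r 1 2.
Definition e1 := xp r 1 2.
Definition h12 := hcar r 1 - hcar r 2.

Lemma br_e1f1 : e1 *m f1 - f1 *m e1 = h12.
Proof. rewrite /e1 /f1 /h12 /xp /xm /hcar; Eexpand; Efinish; ring. Qed.

Lemma br_h12f1 : h12 *m f1 - f1 *m h12 = - (f1 + f1).
Proof. rewrite /f1 /h12 /xm /hcar; Eexpand; Efinish; ring. Qed.

End Brackets.

Section Brackets3.
Variable r' : nat.
Local Notation r := r'.+3.

Lemma br_f1a2_3 : xm r 1 2 *m xmr r 2 - xmr r 2 *m xm r 1 2 = - xmr r 1.
Proof. rewrite /xm /xmr /xmbar; repeat dec1; rewrite /=; Eexpand; Efinish; ring. Qed.

Lemma br_f1a1_3 : xm r 1 2 *m xmr r 1 - xmr r 1 *m xm r 1 2 = 0.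
Proof. rewrite /xm /xmr /xmbar; repeat dec1; rewrite /=; Eexpand; Efinish; ring. Qed.

Lemma br_f1aj_3 j' : (j' <= r')%N -> xm r 1 2 *m xmr r j'.+3 - xmr r j'.+3 *m xm r 1 2 = 0.
Proof.
move=> hj; rewrite /xm /xmr /xmbar; case: ifP => /eqP hjr.
  by case: hjr => ->; Eexpand; Efinish; ring.
Eexpand; Efinish; ring.
Qed.

End Brackets3.

Section Brackets2.
Local Notation r := 2%N.

Lemma br_f1a2_2 : xm r 1 2 *m xmr r 2 - xmr r 2 *m xm r 1 2 = - xmr r 1.
Proof. rewrite /xm /xmr /xmbar /=; Eexpand; Efinish; ring. Qed.

Lemma br_f1a1_2 : xm r 1 2 *m xmr r 1 - xmr r 1 *m xm r 1 2 = - (xmbar r 1 1 + xmbar r 1 1).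
Proof. rewrite /xm /xmr /xmbar /=; Eexpand; Efinish; ring. Qed.

Lemma br_b_f1 : xmbar r 1 1 *m xm r 1 2 = xm r 1 2 *m xmbar r 1 1.
Proof. rewrite /xm /xmbar /=; Eexpand; Efinish; ring. Qed.

Lemma br_b_a1 : xmbar r 1 1 *m xmr r 1 = xmr r 1 *m xmbar r 1 1.
Proof. rewrite /xmr /xmbar /=; Eexpand; Efinish; ring. Qed.

Lemma br_b_a2 : xmbar r 1 1 *m xmr r 2 = xmr r 2 *m xmbar r 1 1.
Proof. rewrite /xmr /xmbar /=; Eexpand; Efinish; ring. Qed.

End Brackets2.

Section Brackets1.
Local Notation r := 1%N.

Lemma br_ef_1 : xpbar r 1 1 *m xmr r 1 - xmr r 1 *m xpbar r 1 1 = hcar r 1.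
Proof. rewrite /xpbar /xmr /xmbar /hcar /=; Eexpand; Efinish; ring. Qed.

Lemma br_hf_1 : hcar r 1 *m xmr r 1 - xmr r 1 *m hcar r 1 = - (xmr r 1 + xmr r 1).
Proof. rewrite /xmr /xmbar /hcar /=; Eexpand; Efinish; ring. Qed.

End Brackets1.

Definition Pl n (A : nat -> 'M[CC]_n) (k : nat -> nat) (l : seq nat) : 'M[CC]_n :=
  foldr (fun i acc => mpow (A i) (k i) *m acc) 1%:M l.

Lemma Pl_eq n (A : nat -> 'M[CC]_n) k k' l : (forall j, j \in l -> k j = k' j) -> Pl A k l = Pl A k' l.
Proof.
elim: l => [|j l IH] h //=; rewrite h ?inE ?eqxx // IH // => i hi.
by apply: h; rewrite inE hi orbT.
Qed.

Lemma Pl_comm n (A : nat -> 'M[CC]_n) (B : 'M[CC]_n) k l :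
  (forall j, j \in l -> GRing.comm B (A j)) -> GRing.comm B (Pl A k l).
Proof.
elim: l => [|j l IH] h /=; first by rewrite idmxE; apply: commr1.
rewrite mulmxE mpowE; apply: commrM; first by apply: commrX; apply: h; rewrite inE eqxx.
by apply: IH => i hi; apply: h; rewrite inE hi orbT.
Qed.

Definition kinc (k : nat -> nat) (i : nat) := fun j => if j == i then (k j).+1 else k j.

Lemma Pl_shift n (A : nat -> 'M[CC]_n) k l i :
  uniq l -> i \in l -> (forall j, j \in l -> GRing.comm (A i) (A j)) ->
  A i *m Pl A k l = Pl A (kinc k i) l.
Proof.
elim: l => [|j l IH] //= /andP [hjl hu] hi hc.
case: (eqVneq j i) => [ej|nj].
  subst j; rewrite /kinc eqxx mulmxA; congr (_ *m _) => //.
  apply: Pl_eq => j hj; case: (eqVneq j i) => // eji.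
  by subst j; rewrite hj in hjl.
have hil : i \in l by move: hi; rewrite inE eq_sym (negbTE nj).
rewrite /kinc (negbTE nj) -/(kinc k i) mulmxA !mulmxE !mpowE.
have hcj : GRing.comm (A i) (A j ^+ k j) by apply: commrX; apply: hc; rewrite inE eqxx.
rewrite hcj -mulrA -!mulmxE IH // => j' hj'; apply: hc; by rewrite inE hj' orbT.
Qed.

Section Main.
Variables (r n : nat) (rho : 'M[CC]_(r.*2) -> 'M[CC]_n) (m : nat -> nat) (v : 'cV[CC]_n).
Hypothesis hrep : is_rep rho.

Local Notation Sp := (spanI (gen_family rho m v)).

Lemma Sp_sub : is_subspace Sp.
Proof. by split; [constructor | exact: spanID | exact: spanIZ]. Qed.

Lemma Sp_nminus y w : nminus y -> Sp w -> Sp (rho y *m w).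
Proof.
move=> hy; apply: spanI_map => u [M [k [[ys [hys ->]] hk ->]]].
apply: spanI_gen; exists (rho y *m foldr (fun y acc => rho y *m acc) 1%:M ys), k; split => //.
  by exists (y :: ys); split => // z; rewrite inE => /orP [/eqP ->|]; [| apply: hys].
by rewrite !mulmxA.
Qed.

Lemma Sp_mono M w : Un_monomial rho M -> Sp w -> Sp (M *m w).
Proof.
case=> ys [hys ->]; elim: ys hys => [|y ys IH] hys hw /=; first by rewrite mul1mx.
rewrite -mulmxA; apply: Sp_nminus; first by apply: hys; rewrite inE eqxx.
by apply: IH => // z hz; apply: hys; rewrite inE hz orbT.
Qed.

Lemma xr_prodE k : xr_prod rho k = Pl (fun i => rho (xmr r i)) k (iota 1 r).
Proof. by []. Qed.

Lemma Un1 : Un_monomial rho 1%:M.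
Proof. by exists [::]. Qed.

Lemma Sp_gen k : (k 1%N <= m 1%N)%N -> Sp (xr_prod rho k *m v).
Proof.
move=> hk; apply: spanI_gen; exists 1%:M, k; split => //; first exact: Un1.
by rewrite mul1mx.
Qed.

Lemma Sp_v : Sp v.
Proof.
have e : xr_prod rho (fun _ => 0%N) *m v = v.
  rewrite xr_prodE; elim: (iota 1 r) => [|j l IH] /=; first by rewrite mul1mx.
  by rewrite -mulmxA IH /mpow /= mul1mx.
have := @Sp_gen (fun _ => 0%N) (leq0n _).
by rewrite e.
Qed.

End Main.

Lemma Epp_sp r i j : (1 <= i <= r)%N -> (1 <= j <= r)%N ->
  is_sp (E r (Posz i) (Posz j) - E r (- Posz j) (- Posz i)).
Proof.
move=> hi hj.
have hi' : (i.-1 < r.*2)%N by lia.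
have hj' : (j.-1 < r.*2)%N by lia.
have := B_sp (Ordinal hi') (Ordinal hj').
rewrite Bm_pp /=; try lia.
by rewrite !prednK //; lia.
Qed.

Lemma Epn_sp r i : (1 <= i <= r)%N -> is_sp (E r (Posz i) (- Posz i)).
Proof.
move=> hi.
have hi' : (i.-1 < r.*2)%N by lia.
have hq : (r.*2 - i < r.*2)%N by lia.
have := B_sp (Ordinal hi') (Ordinal hq).
rewrite Bm_pn /=; try lia.
rewrite prednK; last by lia.
rewrite (_ : (r.*2 - (r.*2 - i))%N = i); last by lia.
exact: half_sp.
Qed.

Lemma aa_comm r n (rho : 'M[CC]_(r.*2) -> 'M[CC]_n) i j : is_rep rho ->
  (1 <= i <= r)%N -> (1 <= j <= r)%N -> GRing.comm (rho (xmr r i)) (rho (xmr r j)).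
Proof.
move=> hrep hi hj; rewrite /GRing.comm -!mulmxE; apply: rho_comm => //; try exact: xmr_sp.
by rewrite !LL_mul //; apply: xmr_LL.
Qed.

Lemma comm_of_br r n (rho : 'M[CC]_(r.*2) -> 'M[CC]_n) X Y : is_rep rho -> is_sp X -> is_sp Y ->
  X *m Y - Y *m X = 0 -> GRing.comm (rho X) (rho Y).
Proof.
move=> hrep hX hY h; rewrite /GRing.comm -!mulmxE; apply: rho_comm => //.
by apply/eqP; rewrite -subr_eq0 h.
Qed.

Lemma f1_nm r' : nminus (xm r'.+2 1 2).
Proof. by apply: gen_nm; exists 1%N, 1%N; split => //; left. Qed.

Section ALL2.
Variables (r' n : nat).
Local Notation r := r'.+2.
Variables (rho : 'M[CC]_(r.*2) -> 'M[CC]_n) (m : nat -> nat) (v : 'cV[CC]_n) (c : 'M[CC]_(r.*2)).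
Hypotheses (hrep : is_rep rho) (hw : highest_weight_vector rho m v).
Hypotheses (hc_nm : nminus c) (hcF : c *m xm r 1 2 = xm r 1 2 *m c)
  (hcA1 : c *m xmr r 1 = xmr r 1 *m c)
  (hFA1 : xm r 1 2 *m xmr r 1 - xmr r 1 *m xm r 1 2 = c)
  (hFA2 : xm r 1 2 *m xmr r 2 - xmr r 2 *m xm r 1 2 = - xmr r 1)
  (hFAj : forall j, (3 <= j <= r)%N -> xm r 1 2 *m xmr r j - xmr r j *m xm r 1 2 = 0).

Local Notation A := (fun j => rho (xmr r j)).
Local Notation F := (rho (xm r 1 2)).

Lemma f1_sp : is_sp (xm r 1 2).
Proof. exact: (nminus_sp_low (f1_nm r')).1. Qed.

Lemma c_sp : is_sp c.
Proof. exact: (nminus_sp_low hc_nm).1. Qed.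

Lemma Fpow_kill : (F ^+ (m 1%N).+1) *m v = 0.
Proof.
case: hw => hv0 hh hxp hxpb.
have he1 : is_sp (xp r 1 2) by apply: Epp_sp.
have hh1 : is_sp (hcar r 1) by apply: Epp_sp.
have hh2 : is_sp (hcar r 2) by apply: Epp_sp.
apply: (@sl2_kill _ (rho (xp r 1 2)) _ (rho (hcar r 1 - hcar r 2))).
- have hb := br_e1f1 r'; rewrite /e1 /f1 /h12 in hb.
  by rewrite -!mulmxE -(rho_br hrep he1 f1_sp) hb.
- have hb := br_h12f1 r'; rewrite /f1 /h12 in hb.
  rewrite -!mulmxE -(rho_br hrep (spB hh1 hh2) f1_sp) hb.
  by rewrite (rhoN hrep (spD f1_sp f1_sp)) (rhoD hrep f1_sp f1_sp) mulr2n.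
- by apply: hxp.
- rewrite rhoB // mulmxBl !hh // -scalerBl; congr (_ *: _).
  by rewrite big_ltn // natrD addrK.
Qed.

Lemma ALL2 k : spanI (gen_family rho m v) (xr_prod rho k *m v).
Proof.
have hA : forall j, (1 <= j <= r)%N -> is_sp (xmr r j) by move=> j hj; apply: xmr_sp.
have hA1 : is_sp (xmr r 1) by apply: hA; lia.
have hA2 : is_sp (xmr r 2) by apply: hA; lia.
pose X := Pl A k (iota 3 r').
have memi : forall j, j \in iota 3 r' -> (3 <= j <= r)%N.
  by move=> j; rewrite mem_iota; lia.
have e : forall k', xr_prod rho k' = A 1%N ^+ (k' 1%N) * (A 2%N ^+ (k' 2%N) * Pl A k' (iota 3 r')).
  by move=> k'; rewrite xr_prodE /= -!mulmxE !mpowE.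
rewrite e (_ : Pl A k (iota 3 r') = X) //.
apply: (@heis_all _ F (A 1%N) (A 2%N) X (rho c) v (m 1%N)).
- have h := rho_br hrep f1_sp hA2; rewrite hFA2 (rhoN hrep hA1) in h.
  by rewrite -!mulmxE -[F *m _](subrK (A 2%N *m F)) -h addrC.
- by rewrite -!mulmxE -hFA1 (rho_br hrep f1_sp hA1) addrC subrK.
- by rewrite /GRing.comm /= -!mulmxE (rho_comm hrep c_sp f1_sp hcF).
- by rewrite /GRing.comm /= -!mulmxE (rho_comm hrep c_sp hA1 hcA1).
- apply: Pl_comm => j hj; have hj' := memi _ hj.
  have hAj : is_sp (xmr r j) by apply: hA; lia.
  exact: (comm_of_br hrep f1_sp hAj (hFAj hj')).
- by apply: aa_comm.
- exact: Fpow_kill.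
- exact: Sp_sub.
- by move=> w hw'; apply: Sp_nminus => //; apply: f1_nm.
- by move=> w hw'; apply: Sp_nminus.
- move=> j l hj.
  pose k' := fun i => if i == 1%N then j else if i == 2%N then l else k i.
  have := @Sp_gen _ _ rho m v k' hj.
  rewrite e /k' /=; congr (spanI _ ((_ * (_ * _)) *m _)).
  apply: Pl_eq => i hi; move: (memi _ hi) => hi'.
  by rewrite ifN ?ifN //; apply/eqP; lia.
Qed.

End ALL2.

Lemma Fkill1 n (rho : 'M[CC]_((1%N).*2) -> 'M[CC]_n) m v :
  is_rep rho -> highest_weight_vector rho m v ->
  (rho (xmr 1 1) ^+ (m 1%N).+1) *m v = 0.
Proof.
move=> hrep [hv0 hh hxp hxpb].
have he : is_sp (xpbar 1 1 1) by rewrite /xpbar /=; apply: Epn_sp.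
have hf : is_sp (xmr 1 1) by apply: xmr_sp.
have hh1 : is_sp (hcar 1 1) by apply: Epp_sp.
apply: (@sl2_kill _ (rho (xpbar 1 1 1)) _ (rho (hcar 1 1))).
- by rewrite -!mulmxE -(rho_br hrep he hf) br_ef_1.
- rewrite -!mulmxE -(rho_br hrep hh1 hf) br_hf_1.
  by rewrite (rhoN hrep (spD hf hf)) (rhoD hrep hf hf) mulr2n.
- by apply: hxpb.
- by rewrite hh // big_nat1.
Qed.

Lemma ALL r n (rho : 'M[CC]_(r.*2) -> 'M[CC]_n) m v : (0 < r)%N ->
  is_rep rho -> highest_weight_vector rho m v ->
  forall k, spanI (gen_family rho m v) (xr_prod rho k *m v).
Proof.
case: r rho => [|[|[|r']]] rho // _ hrep hw k.
- case: (leqP (k 1%N) (m 1%N)) => hk; first exact: Sp_gen.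
  have -> : xr_prod rho k *m v = 0.
    rewrite xr_prodE /= mulmx1 mpowE.
    rewrite (_ : k 1%N = (k 1%N - (m 1%N).+1) + (m 1%N).+1)%N; last by lia.
    by rewrite exprD -mulmxE -mulmxA (Fkill1 hrep hw) mulmx0.
  by constructor.
- have gb : nminus_gen (xmbar 2 1 1) by exists 1%N, 1%N; split => //; right.
  apply: (@ALL2 0 n rho m v (- (xmbar 2 1 1 + xmbar 2 1 1))) => //.
  + by apply: spanI_in; apply: spanIN; apply: spanID; apply: spanI_gen.
  + by rewrite /xm /xmbar /=; Eexpand; Efinish; ring.
  + by rewrite /xmr /xmbar /=; Eexpand; Efinish; ring.
  + exact: br_f1a1_2.
  + exact: br_f1a2_2.
  + by move=> j hj; lia.
- apply: (@ALL2 r'.+1 n rho m v 0) => //.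
  + by apply: spanI_in; constructor.
  + by rewrite mul0mx mulmx0.
  + by rewrite mul0mx mulmx0.
  + exact: br_f1a1_3.
  + exact: br_f1a2_3.
  + move=> j hj; case: j hj => [|[|[|j']]] hj; try lia.
    by apply: br_f1aj_3; lia.
Qed.

Lemma LL_low r (X : 'M[CC]_(r.*2)) : LL X -> lowstrict X.
Proof. by move=> h a b hab; apply: h; case: (ltnP a r) => // hr; apply/orP; right; lia. Qed.

Section Final.
Variables (r n : nat) (rho : 'M[CC]_(r.*2) -> 'M[CC]_n) (m : nat -> nat) (v : 'cV[CC]_n).
Hypotheses (hr : (0 < r)%N) (hrep : is_rep rho) (hw : highest_weight_vector rho m v).

Local Notation Sp := (spanI (gen_family rho m v)).
Local Notation fm ys := (foldr (fun y acc => rho y *m acc) 1%:M ys).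

Lemma Sp_Mx ys k : (forall y, y \in ys -> nminus y) -> Sp (fm ys *m (xr_prod rho k *m v)).
Proof. by move=> h; apply: Sp_mono => //; [exists ys | apply: ALL]. Qed.

Lemma xr_shift i k : (1 <= i <= r)%N -> rho (xmr r i) *m xr_prod rho k = xr_prod rho (kinc k i).
Proof.
move=> hi; rewrite !xr_prodE; apply: Pl_shift; first exact: iota_uniq.
  by rewrite mem_iota; lia.
by move=> j; rewrite mem_iota => hj; apply: aa_comm => //; lia.
Qed.

Lemma xmr_low i : (1 <= i <= r)%N -> lowstrict (xmr r i).
Proof. by move=> hi; apply: LL_low; apply: xmr_LL. Qed.

Lemma Acomm ys : (forall y, y \in ys -> nminus y) ->
  forall i k, (1 <= i <= r)%N -> Sp (rho (xmr r i) *m (fm ys *m (xr_prod rho k *m v))).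
Proof.
elim: ys => [|y ys IH] hys i k hi.
  by rewrite /= mul1mx mulmxA xr_shift //; apply: ALL.
have hy : nminus y by apply: hys; rewrite inE eqxx.
have hys' : forall z, z \in ys -> nminus z by move=> z hz; apply: hys; rewrite inE hz orbT.
have [hysp hylow] := nminus_sp_low hy.
have hxs := xmr_sp hi.
set u := fm ys *m (xr_prod rho k *m v).
rewrite /= -mulmxA -/u mulmxA.
have e : rho (xmr r i) *m rho y = rho y *m rho (xmr r i) + rho (xmr r i *m y - y *m xmr r i).
  by rewrite (rho_br hrep hxs hysp) addrC subrK.
rewrite e mulmxDl.
have [h0 hD hZ] := Sp_sub rho m v.
apply: hD.
  by rewrite -mulmxA; apply: Sp_nminus => //; apply: IH.
apply: (lower_apply hrep); first exact: Sp_sub.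
- exact: sp_bracket.
- by apply: low_br => //; apply: xmr_low.
- by move=> y' hy'; rewrite /u mulmxA -[rho y' *m _]/(fm (y' :: ys)); apply: Sp_Mx => z; rewrite inE => /orP [/eqP ->|]; [| apply: hys'].
- by move=> j hj; apply: IH.
Qed.

Lemma Sp_a i w : (1 <= i <= r)%N -> Sp w -> Sp (rho (xmr r i) *m w).
Proof.
move=> hi; apply: spanI_map => u [M [k [[ys [hys ->]] hk ->]]].
exact: Acomm.
Qed.

Lemma Sp_low L w : is_sp L -> lowstrict L -> Sp w -> Sp (rho L *m w).
Proof.
move=> hL hLl hw'; apply: (lower_apply hrep); first exact: Sp_sub.
- exact: hL.
- exact: hLl.
- by move=> y hy; apply: Sp_nminus.
- by move=> i hi; apply: Sp_a.
Qed.

Definition Wfam (w : 'cV[CC]_n) := exists ys : seq 'M[CC]_(r.*2),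
  (forall y, y \in ys -> is_sp y /\ lowstrict y) /\ w = foldr (fun y acc => rho y *m acc) v ys.

Local Notation W := (spanI Wfam).

Lemma W_sub : is_subspace W.
Proof. by split; [constructor | exact: spanID | exact: spanIZ]. Qed.

Lemma W_low y w : is_sp y -> lowstrict y -> W w -> W (rho y *m w).
Proof.
move=> h1 h2; apply: spanI_map => u [ys [hys ->]]; apply: spanI_gen.
exists (y :: ys); split => // z; rewrite inE => /orP [/eqP ->|]; [by [] | apply: hys].
Qed.

Lemma W_v_line X : is_sp X -> upper X -> exists c : CC, rho X *m v = c *: v.
Proof.
move=> hX hXu; rewrite (rho_decomp hrep) //.
have hP : is_subspace (fun w => exists c : CC, w = c *: v).
  split; first by exists 0; rewrite scale0r.
  - by move=> u w [a ->] [b ->]; exists (a + b); rewrite scalerDl.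
  - by move=> a u [b ->]; exists (a * b); rewrite scalerA.
apply: (subsp_sum (P := fun w => exists c : CC, w = c *: v)) => // p.
apply: (subsp_sum (P := fun w => exists c : CC, w = c *: v)) => // q.
case: (ltnP q p) => hqp.
  by exists 0; rewrite hXu // mul0r !scale0r.
have [c hc] := Bm_up hrep hw hqp.
by exists (X p q / 2 * c); rewrite hc scalerA.
Qed.

Lemma W_up ys : (forall y, y \in ys -> is_sp y /\ lowstrict y) ->
  forall X, is_sp X -> upper X -> W (rho X *m foldr (fun y acc => rho y *m acc) v ys).
Proof.
have hWv : W v by apply: spanI_gen; exists [::].
elim: ys => [|y ys IH] hys X hX hXu /=.
  by have [c ->] := W_v_line hX hXu; apply: spanIZ.
have [hy1 hy2] : is_sp y /\ lowstrict y by apply: hys; rewrite inE eqxx.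
have hys' : forall z, z \in ys -> is_sp z /\ lowstrict z by move=> z hz; apply: hys; rewrite inE hz orbT.
set u := foldr (fun y acc => rho y *m acc) v ys.
have e : rho X *m rho y = rho y *m rho X + rho (X *m y - y *m X).
  by rewrite (rho_br hrep hX hy1) addrC subrK.
have hB := sp_bracket hX hy1.
rewrite mulmxA e mulmxDl.
apply: spanID; first by rewrite -mulmxA; apply: W_low => //; apply: IH.
rewrite (low_up (X *m y - y *m X)) (rhoD hrep (lowpart_sp hB) (uppart_sp hB)) mulmxDl.
apply: spanID.
  apply: spanI_gen; exists (lowpart (X *m y - y *m X) :: ys); split => //.
  move=> z; rewrite inE => /orP [/eqP ->|]; last by apply: hys'.
  by split; [apply: lowpart_sp | apply: lowpart_low].
by apply: IH => //; [apply: uppart_sp | apply: uppart_up].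
Qed.

Lemma W_all X w : is_sp X -> W w -> W (rho X *m w).
Proof.
move=> hX; apply: spanI_map => u [ys [hys ->]].
rewrite (low_up X) (rhoD hrep (lowpart_sp hX) (uppart_sp hX)) mulmxDl.
apply: spanID; last by apply: W_up => //; [apply: uppart_sp | apply: uppart_up].
apply: spanI_gen; exists (lowpart X :: ys); split => //.
move=> z; rewrite inE => /orP [/eqP ->|]; last by apply: hys.
by split; [apply: lowpart_sp | apply: lowpart_low].
Qed.

Lemma W_Sp w : W w -> Sp w.
Proof.
apply: span_induct; [constructor | exact: spanID | exact: spanIZ |].
move=> u [ys [hys ->]]; elim: ys hys => [|y ys IH] hys /=; first exact: Sp_v.
have [h1 h2] : is_sp y /\ lowstrict y by apply: hys; rewrite inE eqxx.
apply: Sp_low => //; apply: IH => z hz; apply: hys; by rewrite inE hz orbT.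
Qed.

Lemma final (hirr : irreducible_rep rho) w : in_span (gen_family rho m v) w.
Proof.
apply: spanI_in; apply: W_Sp.
case: hirr => _ hP; apply: hP.
- exact: W_sub.
- by move=> X u hX hu; apply: W_all.
- exists v; split; last by case: hw.
  by apply: spanI_gen; exists [::].
Qed.

End Final.

Unset Implicit Arguments.
Set Strict Implicit.

Theorem lemma4p5 (r n : nat) (rho : 'M[CC]_(r.*2) -> 'M[CC]_n)
    (m : nat -> nat) (v : 'cV[CC]_n) :
  (0 < r)%N ->
  is_rep rho -> irreducible_rep rho -> highest_weight_vector rho m v ->
  forall w : 'cV[CC]_n, in_span (gen_family rho m v) w.
Proof.
move=> hr hrep hirr hw w.
by apply: final.
Qed.
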